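(* Let $\beta>2\alpha>0$ with $\beta+2\alpha>1$, let $\varphi_N(x)=\frac12x^TAx-\sum_{k=1}^{s_N}\log\cosh(x^TAe_k)$ for $x\in\mathbb{R}^{s_N}$, and let $x$ be a minimizer of $\varphi_N$. Then $x_k\ge0$ for some $k\in\{1,\dots,s_N\}$ if and only if $x_k\ge0$ for all $k\in\{1,\dots,s_N\}$.
   Context: $A$ is the $s_N\times s_N$ symmetric circulant matrix $A=\beta I+\alpha(P+P^T)$, where $P$ is the cyclic shift matrix (so $A_{kk}=\beta$, $A_{k,k\pm1}=\alpha$ with indices mod $s_N$); $e_k$ are the standard basis vectors of $\mathbb{R}^{s_N}$. *)

(* Defs.v *)
From mathcomp Require Import all_boot all_order all_algebra.
From mathcomp Require Import all_classical all_reals all_analysis.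
Set Implicit Arguments. Unset Strict Implicit. Unset Printing Implicit Defensive.
Import Order.TTheory GRing.Theory Num.Theory.
Local Open Scope ring_scope.

Definition cosh {R : realType} (t : R) : R := (expR t + expR (- t)) / 2.

Definition cyc_shift {R : realType} (n : nat) : 'M[R]_n :=
  \matrix_(i < n, j < n) ((nat_of_ord i == ((nat_of_ord j).+1 %% n)%N)%:R).

Definition circA {R : realType} (n : nat) (alpha beta : R) : 'M[R]_n :=
  beta%:M + alpha *: (cyc_shift n + (cyc_shift n)^T).

Definition ebasis {R : realType} (n : nat) (k : 'I_n) : 'cV[R]_n := delta_mx k 0.

Definition phiN {R : realType} (n : nat) (alpha beta : R) (x : 'cV[R]_n) : R :=
  2^-1 * (x^T *m circA n alpha beta *m x) 0 0
  - \sum_(k < n) ln (cosh ((x^T *m circA n alpha beta *m ebasis (R:=R) k) 0 0)).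

(* Main.v *)
Require Import Defs.
From mathcomp Require Import all_boot all_order all_algebra.
From mathcomp Require Import all_classical all_reals all_analysis.
Import Order.TTheory GRing.Theory Num.Theory.
Local Open Scope ring_scope.
From mathcomp Require Import ring lra zify.

Definition th {R : realType} (t : R) : R :=
  (expR t - expR (- t)) / (expR t + expR (- t)).

Lemma cosh_gt0 {R : realType} (t : R) : 0 < cosh t.
Proof. rewrite /cosh; apply: divr_gt0 => //; apply: addr_gt0; exact: expR_gt0. Qed.

Lemma coshN {R : realType} (t : R) : cosh (- t) = cosh t.
Proof. by rewrite /cosh opprK addrC. Qed.

Lemma thN {R : realType} (t : R) : th (- t) = - th t.
Proof. rewrite /th opprK (addrC (expR (-t))) -mulNr; congr (_ / _); ring. Qed.

Lemma th_ge0 {R : realType} (t : R) : 0 <= t -> 0 <= th t.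
Proof.
move=> t0; rewrite /th; apply: divr_ge0.
  rewrite subr_ge0 ler_expR; lra.
apply: addr_ge0; exact: ltW (expR_gt0 _).
Qed.


Lemma th_lt0 {R : realType} (t : R) : t < 0 -> th t < 0.
Proof.
move=> t0; rewrite /th; rewrite pmulr_llt0; last first.
  by rewrite invr_gt0; apply: addr_gt0; exact: expR_gt0.
rewrite subr_lt0 ltr_expR; lra.
Qed.

Lemma th_abs {R : realType} (t : R) : `|th t| = th `|t|.
Proof.
have [t0|t0] := leP 0 t.
  by rewrite !ger0_norm // th_ge0.
by rewrite !ltr0_norm ?th_lt0 // thN.
Qed.

Lemma th_inj {R : realType} (a b : R) : th a = th b -> a = b.
Proof.
rewrite /th => h.
have pa := expR_gt0 a; have pb := expR_gt0 b.
have qa := expR_gt0 (-a); have qb := expR_gt0 (-b).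
have ha : expR a * expR (- a) = 1 by rewrite -expRD subrr expR0.
have hb : expR b * expR (- b) = 1 by rewrite -expRD subrr expR0.
have sa : expR a + expR (- a) != 0 by rewrite gt_eqF // addr_gt0.
have sb : expR b + expR (- b) != 0 by rewrite gt_eqF // addr_gt0.
have e : expR a * expR (- b) = expR b * expR (- a).
  move/eqP: h; rewrite eqr_div // => /eqP h.
  have : (expR a * expR (- b) - expR b * expR (- a)) * 2 = 0.
    rewrite -[LHS]subr0 -(subrr ((expR a - expR (- a)) * (expR b + expR (- b)))).
    rewrite {2}h; ring.
  move/eqP; rewrite mulf_eq0 pnatr_eq0 orbF subr_eq0 => /eqP //.
move: e; rewrite -!expRD => /expR_inj; lra.
Qed.

Lemma lncosh_conv {R : realType} (a b : R) :
  ln (cosh a) + th a * (b - a) <= ln (cosh b).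
Proof.
set h := b - a; set tau := th a.
set p := expR a; set q := expR (- a).
have pp : 0 < p := expR_gt0 _. have qp : 0 < q := expR_gt0 _.
have pq : p * q = 1 by rewrite /p /q -expRD subrr expR0.
set E := expR (tau * h).
have Ep : 0 < E := expR_gt0 _.
have h1 : E * (1 + (1 - tau) * h) <= expR h.
  have -> : expR h = E * expR ((1 - tau) * h) by rewrite /E -expRD; congr expR; ring.
  by rewrite ler_pM2l // expR_ge1Dx.
have h2 : E * (1 - (1 + tau) * h) <= expR (- h).
  have -> : expR (- h) = E * expR (- ((1 + tau) * h)) by rewrite /E -expRD; congr expR; ring.
  by rewrite ler_pM2l // (le_trans _ (expR_ge1Dx _)) //; lra.
have cb : cosh b = (p * expR h + q * expR (- h)) / 2.
  by rewrite /cosh /p /q -!expRD /h; congr ((expR _ + expR _) / 2); ring.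
have key : cosh a * E <= cosh b.
  rewrite cb.
  have -> : cosh a * E = (p * (E * (1 + (1 - tau) * h)) + q * (E * (1 - (1 + tau) * h))) / 2.
    rewrite /cosh /tau /th -/p -/q.
    have s : p + q != 0 by rewrite gt_eqF // addr_gt0.
    field; exact: s.
  rewrite ler_pM2r // ; apply: lerD; rewrite ler_pM2l //.
move: key; rewrite -ler_ln ?posrE ?mulr_gt0 ?cosh_gt0 ?expR_gt0 //.
rewrite lnM ?posrE ?cosh_gt0 ?expR_gt0 // expRK.
  by [].
  by apply: addr_gt0; apply: expR_gt0.
by apply: addr_gt0; apply: expR_gt0.
Qed.


Definition Bf {R : realType} {n} (M : 'M[R]_n) (x y : 'cV[R]_n) : R :=
  \sum_i \sum_j x i 0 * M i j * y j 0.
Definition wv {R : realType} {n} (M : 'M[R]_n) (x : 'cV[R]_n) (k : 'I_n) : R :=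
  \sum_i x i 0 * M i k.

Lemma quadE {R : realType} {n} (M : 'M[R]_n) x : (x^T *m M *m x) 0 0 = Bf M x x.
Proof.
rewrite /Bf mxE exchange_big /=; apply: eq_bigr => j _.
rewrite mxE mulr_suml; apply: eq_bigr => i _; by rewrite mxE.
Qed.

Lemma linE {R : realType} {n} (M : 'M[R]_n) x k : (x^T *m M *m ebasis k) 0 0 = wv M x k.
Proof.
rewrite /wv mxE (bigD1 k) //= big1 ?addr0.
  rewrite /ebasis [delta_mx _ _ _ _]mxE !eqxx mulr1 mxE; apply: eq_bigr => i _; by rewrite mxE.
move=> j /negbTE jk; by rewrite /ebasis [delta_mx _ _ _ _]mxE jk mulr0.
Qed.

Lemma BwE {R : realType} {n} (M : 'M[R]_n) (x y : 'cV[R]_n) : \sum_k wv M x k * y k 0 = Bf M x y.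
Proof.
rewrite /Bf /wv exchange_big /=; apply: eq_bigr => j _.
by rewrite mulr_suml.
Qed.

Lemma Bsym {R : realType} {n} (M : 'M[R]_n) x y : M^T = M -> Bf M x y = Bf M y x.
Proof.
move=> sM; rewrite /Bf exchange_big /=; apply: eq_bigr => j _; apply: eq_bigr => i _.
have -> : M i j = M j i by rewrite -{1}sM mxE.
ring.
Qed.

Lemma BBl {R : realType} {n} (M : 'M[R]_n) x y z : Bf M (x - y) z = Bf M x z - Bf M y z.
Proof.
rewrite /Bf -sumrB; apply: eq_bigr => i _; rewrite -sumrB; apply: eq_bigr => j _.
rewrite !mxE; ring.
Qed.

Lemma BBr {R : realType} {n} (M : 'M[R]_n) x y z : Bf M z (x - y) = Bf M z x - Bf M z y.
Proof.
rewrite /Bf -sumrB; apply: eq_bigr => i _; rewrite -sumrB; apply: eq_bigr => j _.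
rewrite !mxE; ring.
Qed.

Lemma phiNE {R : realType} n (alpha beta : R) x :
  phiN alpha beta x = 2^-1 * Bf (circA n alpha beta) x x
     - \sum_k ln (cosh (wv (circA n alpha beta) x k)).
Proof.
rewrite /phiN quadE; congr (_ - _); apply: eq_bigr => k _; by rewrite linE.
Qed.

Lemma circA_sym {R : realType} (n : nat) (alpha beta : R) : (circA n alpha beta)^T = circA n alpha beta.
Proof.
apply/matrixP => i j; rewrite /circA !mxE; congr (_ + _ * _); [by rewrite eq_sym | by rewrite addrC].
Qed.

Definition Pe {R : realType} {n} (i j : 'I_n) : R := ((nat_of_ord i == ((nat_of_ord j).+1 %% n)%N)%:R).

Lemma circAE {R : realType} n (alpha beta : R) i j :
  circA n alpha beta i j = beta * (i == j)%:R + alpha * (Pe i j + Pe j i).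
Proof. by rewrite /circA !mxE /Pe mulr_natr. Qed.


Lemma Pe_sum {R : realType} {n} (f : 'I_n -> R) j : \sum_i f i * Pe i j = f (ordS j).
Proof.
rewrite (bigD1 (ordS j)) //= big1 ?addr0.
  by rewrite /Pe eqxx mulr1.
move=> i /negbTE h; rewrite /Pe.
have -> : (nat_of_ord i == ((nat_of_ord j).+1 %% n)%N) = (i == ordS j) by [].
by rewrite h mulr0.
Qed.

Lemma A_ge0 {R : realType} n (alpha beta : R) i j :
  0 <= alpha -> 0 <= beta -> 0 <= circA n alpha beta i j.
Proof.
move=> a0 b0; rewrite circAE /Pe; apply: addr_ge0; apply: mulr_ge0 => //.
Qed.

Lemma A_S {R : realType} n (alpha beta : R) k :
  0 <= alpha -> 0 <= beta -> alpha <= circA n alpha beta (ordS k) k.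
Proof.
move=> a0 b0; rewrite circAE.
have -> : Pe (ordS k) k = 1 :> R by rewrite /Pe eqxx.
have h1 : 0 <= beta * ((ordS k == k)%:R) by apply: mulr_ge0.
have h2 : 0 <= Pe k (ordS k) :> R by rewrite /Pe.
have h3 : 0 <= alpha * Pe k (ordS k) by apply: mulr_ge0.
lra.
Qed.

Lemma A_posdef {R : realType} n (alpha beta : R) (u : 'cV[R]_n) : 0 <= alpha ->
  (beta - 2 * alpha) * \sum_i u i 0 ^+ 2 <= Bf (circA n alpha beta) u u.
Proof.
move=> a0.
have e : Bf (circA n alpha beta) u u =
   beta * \sum_i u i 0 ^+ 2 + alpha * \sum_j u (ordS j) 0 * u j 0
   + alpha * \sum_i u i 0 * u (ordS i) 0.
  have T1 : forall i, \sum_j u i 0 * (beta * (i == j)%:R) * u j 0 = beta * u i 0 ^+ 2.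
    move=> i; rewrite (bigD1 i) //= big1 ?addr0; first by rewrite eqxx /= mulr1; ring.
    by move=> j /negbTE h; rewrite eq_sym h /= mulr0; ring.
  have T2 : \sum_i \sum_j u i 0 * (alpha * Pe i j) * u j 0 =
            alpha * \sum_j u (ordS j) 0 * u j 0.
    rewrite exchange_big /= mulr_sumr; apply: eq_bigr => j _.
    rewrite -(Pe_sum (fun i => u i 0)) !mulr_suml mulr_sumr; apply: eq_bigr => i _; ring.
  have T3 : \sum_i \sum_j u i 0 * (alpha * Pe j i) * u j 0 =
            alpha * \sum_i u i 0 * u (ordS i) 0.
    rewrite mulr_sumr; apply: eq_bigr => i _.
    rewrite -(Pe_sum (fun j => u j 0)) mulr_sumr mulr_sumr; apply: eq_bigr => j _; ring.
  rewrite -T2 -T3 mulr_sumr -!big_split /=; apply: eq_bigr => i _.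
  rewrite -T1 -!big_split /=; apply: eq_bigr => j _; rewrite circAE; ring.
rewrite e.
have s1 : \sum_i u (ordS i) 0 ^+ 2 = \sum_i u i 0 ^+ 2.
  by rewrite [RHS](reindex_inj (@ordS_inj n)).
have s2 : \sum_i u i 0 * u (ordS i) 0 = \sum_j u (ordS j) 0 * u j 0.
  by apply: eq_bigr => i _; ring.
have s3 : 0 <= \sum_i (u (ordS i) 0 + u i 0) ^+ 2 by apply: sumr_ge0 => i _; exact: sqr_ge0.
have s4 : \sum_i (u (ordS i) 0 + u i 0) ^+ 2 =
   \sum_i u (ordS i) 0 ^+ 2 + 2 * \sum_j u (ordS j) 0 * u j 0 + \sum_i u i 0 ^+ 2.
  rewrite mulr_sumr -!big_split /=; apply: eq_bigr => i _; ring.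
rewrite s2; rewrite s1 in s4.
set S := \sum_i u i 0 ^+ 2 in s4 s3 *.
set Q := \sum_j u (ordS j) 0 * u j 0 in s4 s3 *.
have : 0 <= alpha * (S + Q).
  apply: mulr_ge0 => //; lra.
lra.
Qed.


Lemma crit {R : realType} n (alpha beta : R) (x : 'cV[R]_n) :
  0 < 2 * alpha -> 2 * alpha < beta ->
  (forall y : 'cV[R]_n, phiN alpha beta x <= phiN alpha beta y) ->
  forall k, x k 0 = th (wv (circA n alpha beta) x k).
Proof.
move=> a0 ab min.
set A := circA n alpha beta.
set T : 'cV[R]_n := \col_k th (wv A x k).
have conv : \sum_k (ln (cosh (wv A x k)) + T k 0 * (wv A T k - wv A x k))
            <= \sum_k ln (cosh (wv A T k)).
  apply: ler_sum => k _; rewrite mxE; exact: lncosh_conv.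
have e1 : \sum_k (ln (cosh (wv A x k)) + T k 0 * (wv A T k - wv A x k)) =
   \sum_k ln (cosh (wv A x k)) + (Bf A T T - Bf A x T).
  rewrite big_split /= -!BwE -sumrB; congr (_ + _); apply: eq_bigr => k _; ring.
have e2 : Bf A (x - T) (x - T) = Bf A x x - 2 * Bf A x T + Bf A T T.
  rewrite !BBl !BBr (Bsym A T x) ?circA_sym //; ring.
have m1 := min T.
rewrite !phiNE -/A in m1.
have hB : Bf A (x - T) (x - T) <= 0.
  rewrite e2; rewrite e1 in conv; lra.
have a0' : 0 <= alpha by lra.
have pd := A_posdef n alpha beta (x - T) a0'.
rewrite -/A in pd.
set S := \sum_i (x - T) i 0 ^+ 2 in pd.
have S0 : 0 <= S by apply: sumr_ge0 => i _; exact: sqr_ge0.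
have S1 : S <= 0.
  have : (beta - 2 * alpha) * S <= 0 by lra.
  rewrite pmulr_rle0 //; lra.
have S2 : S = 0 by lra.
move=> k.
have h0 : (x - T) k 0 ^+ 2 = 0.
  apply: (psumr_eq0P (P := predT) (F := fun i => (x - T) i 0 ^+ 2)) => //.
  move=> i _; exact: sqr_ge0.
move/eqP: h0; rewrite sqrf_eq0 [(x - T) k 0]mxE [(- T) k 0]mxE subr_eq0 => /eqP ->.
by rewrite /T mxE.
Qed.


Lemma lc_abs {R : realType} (a b : R) :
  `|th a| * b - th a * a <= ln (cosh b) - ln (cosh a).
Proof.
have [a0|a0] := leP 0 a.
  have := lncosh_conv a b; rewrite ger0_norm ?th_ge0 //.
  rewrite mulrBr; lra.
have := lncosh_conv (- a) b; rewrite ltr0_norm ?th_lt0 // coshN thN.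
rewrite mulrBr; rewrite !mulNr !mulrN; lra.
Qed.

Definition absv {R : realType} {n} (x : 'cV[R]_n) : 'cV[R]_n := map_mx (fun t => `|t|) x.

Lemma absmin {R : realType} n (alpha beta : R) (x : 'cV[R]_n) :
  0 <= alpha -> 0 <= beta ->
  (forall k, x k 0 = th (wv (circA n alpha beta) x k)) ->
  phiN alpha beta (absv x) <= phiN alpha beta x.
Proof.
move=> a0 b0 fx.
set A := circA n alpha beta.
rewrite !phiNE -/A.
have D0 : Bf A x x <= Bf A (absv x) (absv x).
  apply: ler_sum => i _; apply: ler_sum => j _.
  rewrite /absv [map_mx _ x i 0]mxE [map_mx _ x j 0]mxE; apply: le_trans (ler_norm _) _.
  by rewrite !normrM (ger0_norm (A_ge0 n alpha beta i j a0 b0)).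
have D1 : Bf A (absv x) (absv x) - Bf A x x <=
   \sum_k ln (cosh (wv A (absv x) k)) - \sum_k ln (cosh (wv A x k)).
  rewrite -!BwE -!sumrB; apply: ler_sum => k _.
  rewrite mxE (fx k) mulrC (mulrC (wv A x k)); exact: lc_abs.
have h2 : 0 < 2^-1 :> R by rewrite invr_gt0.
set a := Bf A x x in D0 D1 *. set b := Bf A (absv x) (absv x) in D0 D1 *.
set c := \sum_k _ in D1 *. set d := \sum_k _ in D1 *.
have : 2^-1 * (b - a) <= b - a.
  rewrite ler_pdivrMl ?ltr0n //; lra.
rewrite mulrBr; lra.
Qed.


Lemma iter_ordS n (i : 'I_n) m : nat_of_ord (iter m (@ordS n) i) = ((i + m) %% n)%N.
Proof.
elim: m => [|m IH] /=.
  by rewrite addn0 modn_small.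
by rewrite IH -addn1 modnDml addn1 addnS.
Qed.

Theorem lemma4p4 (R : realType) (n : nat) (alpha beta : R) (x : 'cV[R]_n) :
  (0 < n)%N ->
  0 < 2 * alpha -> 2 * alpha < beta -> 1 < beta + 2 * alpha ->
  (forall y : 'cV[R]_n, phiN alpha beta x <= phiN alpha beta y) ->
  ((exists k : 'I_n, 0 <= x k 0) <-> (forall k : 'I_n, 0 <= x k 0)).
Proof.
move=> n0 a2 ab _ min.
have a0 : 0 <= alpha by lra.
have a0s : 0 < alpha by lra.
have b0 : 0 <= beta by lra.
set A := circA n alpha beta.
have fx := crit _ _ _ _ a2 ab min.
have min' : forall y : 'cV[R]_n, phiN alpha beta (absv x) <= phiN alpha beta y.
  move=> y; have := absmin _ _ _ _ a0 b0 fx; have := min y; lra.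
have fax := crit _ _ _ _ a2 ab min'.
have key : forall k, wv A (absv x) k = `|wv A x k|.
  move=> k; apply: th_inj; rewrite -th_abs -fx -fax /absv mxE //.
have step : forall k, 0 <= x k 0 -> 0 <= x (ordS k) 0.
  move=> k xk.
  have ak : 0 <= wv A x k.
    rewrite leNgt; apply/negP => /th_lt0; rewrite -fx; lra.
  have e : \sum_i (`|x i 0| - x i 0) * A i k = wv A (absv x) k - wv A x k.
    rewrite /wv -sumrB; apply: eq_bigr => i _; rewrite /absv [map_mx _ x i 0]mxE; ring.
  rewrite key ger0_norm // subrr in e.
  have h0 : (`|x (ordS k) 0| - x (ordS k) 0) * A (ordS k) k = 0.
    apply: (psumr_eq0P (P := predT) (F := fun i => (`|x i 0| - x i 0) * A i k)) => //.
    move=> i _; apply: mulr_ge0; first by rewrite subr_ge0 ler_norm.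
    exact: A_ge0.
  have As := A_S n alpha beta k a0 b0; rewrite -/A in As.
  move/eqP: h0; rewrite mulf_eq0 => /orP [|/eqP h]; last by lra.
  by rewrite subr_eq0 => /eqP <-.
split; last first.
  by move=> h; exists (Ordinal n0); apply: h.
case=> i xi k.
have all : forall m, 0 <= x (iter m (@ordS n) i) 0.
  by elim=> [|m IH] //=; apply: step.
have -> : k = iter (k + n - i) (@ordS n) i.
  apply: val_inj; rewrite /= iter_ordS.
  have -> : (i + (k + n - i) = k + n)%N.
    have := ltn_ord i; lia.
  by rewrite modnDr modn_small.
exact: all.
Qed.
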